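(* Let $K$ be a field of characteristic $\neq2$ and $\tau=(-1,-1,-1,-1)$. Then $\mathrm{Aut}\,A_\tau=G_{\mathrm{odd}}$, the group of all odd automorphisms of $K\langle x_1,x_2\rangle$.
   Context: $A=K\langle x_1,x_2\rangle$ is the free associative algebra with unit on $x_1,x_2$; $\varphi=(f_1,f_2)$ denotes the algebra endomorphism with $\varphi(x_1)=f_1$, $\varphi(x_2)=f_2$. Let $A=B_0\oplus B_1$, where $B_0$ (resp. $B_1$) is the linear span of all words of even (resp. odd) length. An automorphism $\varphi=(f_1,f_2)$ of $A$ is odd if $f_1,f_2\in B_1$; these form a group $G_{\mathrm{odd}}$. For $q_{ij}\in K$, the diagonal braiding $\tau=(q_{11},q_{12},q_{21},q_{22})$ on $A$ is the linear map $A\otimes A\to A\otimes A$ given on words $u,v$ by $(u\otimes v)\tau=q_{11}^{s_1t_1}q_{12}^{s_1t_2}q_{21}^{s_2t_1}q_{22}^{s_2t_2}\,(v\otimes u)$, where $s_i$ (resp. $t_i$) is the number of occurrences of $x_i$ in $u$ (resp. $v$). $A_\tau$ is $A$ equipped with $\tau$, and $\mathrm{Aut}\,A_\tau$ is the group of algebra automorphisms $\varphi$ of $A$ satisfying $(\varphi\otimes\varphi)((w)\tau)=((\varphi\otimes\varphi)(w))\tau$ for all $w\in A\otimes A$, viewed as a subgroup of $\mathrm{Aut}\,K\langle x_1,x_2\rangle$. *)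

(* Defs.v *)
(* The free associative algebra K<x_1,x_2> is modelled by
   formal finite linear combinations of words, compared coefficientwise. *)
From HB Require Import structures.
From mathcomp Require Import all_boot all_order all_algebra.
Set Implicit Arguments. Unset Strict Implicit. Unset Printing Implicit Defensive.
Import GRing.Theory.
Local Open Scope ring_scope.

(* words in the letters x_0, x_1 (x_1, x_2 of the paper) *)
Definition word := seq 'I_2.

Section FreeAlg.
Variable K : fieldType.

Definition fpoly := seq (K * word).
Definition coef (p : fpoly) (w : word) : K := \sum_(t <- p | t.2 == w) t.1.
Definition peq (p q : fpoly) : Prop := forall w, coef p w = coef q w.

Definition pX (i : 'I_2) : fpoly := [:: (1, [:: i])].
Definition pone : fpoly := [:: (1, [::])].
Definition pmul (p q : fpoly) : fpoly :=
  [seq (t.1 * s.1, t.2 ++ s.2) | t <- p, s <- q].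
Definition pscale (a : K) (p : fpoly) : fpoly := [seq (a * t.1, t.2) | t <- p].
Definition pprod (ps : seq fpoly) : fpoly := foldr pmul pone ps.

(* the algebra endomorphism phi = (f 0, f 1), i.e. x_i |-> f i, applied to p *)
Definition subst (f : 'I_2 -> fpoly) (p : fpoly) : fpoly :=
  flatten [seq pscale t.1 (pprod (map f t.2)) | t <- p].

Definition is_aut (f : 'I_2 -> fpoly) : Prop :=
  exists g : 'I_2 -> fpoly,
    (forall i, peq (subst f (g i)) (pX i)) /\ (forall i, peq (subst g (f i)) (pX i)).

Definition odd_endo (f : 'I_2 -> fpoly) : Prop :=
  forall i w, coef (f i) w != 0 -> odd (size w).

(* A (x) A, as formal sums of (coefficient, (u, v)) meaning coef * u (x) v *)
Definition tens := seq (K * (word * word)).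
Definition tcoef (t : tens) (uv : word * word) : K := \sum_(s <- t | s.2 == uv) s.1.
Definition teq (t t' : tens) : Prop := forall uv, tcoef t uv = tcoef t' uv.

(* diagonal braiding coefficient q_11^{s1 t1} q_12^{s1 t2} q_21^{s2 t1} q_22^{s2 t2} *)
Definition braid_coef (q : 'I_2 -> 'I_2 -> K) (u v : word) : K :=
  \prod_(i < 2) \prod_(j < 2) q i j ^+ (count_mem i u * count_mem j v).

Definition tau (q : 'I_2 -> 'I_2 -> K) (t : tens) : tens :=
  [seq (braid_coef q s.2.1 s.2.2 * s.1, (s.2.2, s.2.1)) | s <- t].

Definition ptens (p r : fpoly) : tens := [seq (b.1 * c.1, (b.2, c.2)) | b <- p, c <- r].

Definition tmap (f : 'I_2 -> fpoly) (t : tens) : tens :=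
  flatten [seq [seq (s.1 * c.1, c.2)
               | c <- ptens (subst f [:: (1, s.2.1)]) (subst f [:: (1, s.2.2)])]
          | s <- t].

Definition braided (q : 'I_2 -> 'I_2 -> K) (f : 'I_2 -> fpoly) : Prop :=
  forall t : tens, teq (tmap f (tau q t)) (tau q (tmap f t)).

Definition in_Aut_tau (q : 'I_2 -> 'I_2 -> K) (f : 'I_2 -> fpoly) : Prop :=
  is_aut f /\ braided q f.

Definition in_G_odd (f : 'I_2 -> fpoly) : Prop := is_aut f /\ odd_endo f.

End FreeAlg.

(* Main.v *)
Require Import Defs.
From mathcomp Require Import all_boot all_order all_algebra zify.
Set Implicit Arguments. Unset Strict Implicit. Unset Printing Implicit Defensive.
Import GRing.Theory.
Local Open Scope ring_scope.

Section Aux.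
Variable K : fieldType.

Lemma sum_nz_ex (I : eqType) (r : seq I) (F : I -> K) :
  \sum_(i <- r) F i != 0 -> exists2 i, i \in r & F i != 0.
Proof.
elim: r => [|a r IH]; first by rewrite big_nil eqxx.
rewrite big_cons => H.
case: (eqVneq (F a) 0) => Ha; last by exists a => //; rewrite inE eqxx.
move: H; rewrite Ha add0r => /IH [i Hi Fi]; by exists i => //; rewrite inE Hi orbT.
Qed.

Lemma coefE (p : fpoly K) w : coef p w = \sum_(t <- p) (if t.2 == w then t.1 else 0).
Proof. by rewrite /coef big_mkcond. Qed.

Lemma coef_cat (p q : fpoly K) w : coef (p ++ q) w = coef p w + coef q w.
Proof. by rewrite /coef big_cat. Qed.

Lemma coef_pscale a (p : fpoly K) w : coef (pscale a p) w = a * coef p w.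
Proof.
rewrite !coefE /pscale big_map mulr_sumr; apply: eq_bigr => t _ /=.
by case: ifP; rewrite ?mulr0.
Qed.

Lemma coef_pmul (p q : fpoly K) w :
  coef (pmul p q) w =
  \sum_(t <- p) \sum_(s <- q) (if t.2 ++ s.2 == w then t.1 * s.1 else 0).
Proof. by rewrite coefE /pmul big_allpairs_dep. Qed.

Lemma cat_eq_l (a b w : word) :
  (a ++ b == w) = (take (size a) w == a) && (b == drop (size a) w).
Proof.
apply/eqP/andP => [<-|[/eqP ea /eqP eb]].
  by rewrite take_size_cat // drop_size_cat.
by rewrite -[w](cat_take_drop (size a)) ea eb.
Qed.

Lemma cat_eq_r (a b w : word) :
  (a ++ b == w) = (a == take (size w - size b) w) && (drop (size w - size b) w == b).
Proof.
apply/eqP/andP => [<-|[/eqP ea /eqP eb]].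
  by rewrite size_cat addnK take_size_cat // drop_size_cat.
by rewrite -[w](cat_take_drop (size w - size b)) -ea eb.
Qed.

Lemma coef_pmul_zero (p q : fpoly K) w :
  (forall w', coef p w' = 0) -> coef (pmul p q) w = 0.
Proof.
move=> H; rewrite coef_pmul exchange_big /=; apply: big1 => s _.
have -> : \sum_(t <- p) (if t.2 ++ s.2 == w then t.1 * s.1 else 0) =
  (if drop (size w - size s.2) w == s.2 then coef p (take (size w - size s.2) w) * s.1 else 0).
  rewrite coefE mulr_suml; case: ifP => hd.
    by apply: eq_bigr => t _; rewrite cat_eq_r hd andbT; case: ifP; rewrite ?mul0r.
  by apply: big1 => t _; rewrite cat_eq_r hd andbF.
by rewrite H mul0r; case: ifP.
Qed.

Definition H (p : fpoly K) (e : bool) := forall w, coef p w != 0 -> odd (size w) = e.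

Lemma coef_filter (P : word -> bool) (p : fpoly K) w :
  coef [seq t <- p | P t.2] w = if P w then coef p w else 0.
Proof.
rewrite /coef big_filter_cond; case: ifP => hP.
  by apply: eq_bigl => t; case: (eqVneq t.2 w) => [->|]; rewrite ?hP ?andbF.
by apply: big1 => t /andP [hp /eqP e]; rewrite e hP in hp.
Qed.

Lemma H_pmul (p q : fpoly K) e1 e2 : H p e1 -> H q e2 -> H (pmul p q) (e1 (+) e2).
Proof.
move=> Hp Hq w.
pose g := [seq t <- p | odd (size t.2) == e1].
pose b := [seq t <- p | ~~ (odd (size t.2) == e1)].
have ep : coef (pmul p q) w = coef (pmul g q) w + coef (pmul b q) w.
  rewrite !coef_pmul -big_cat; apply: perm_big; rewrite perm_sym.
  by rewrite (perm_filterC (fun t : K * word => odd (size t.2) == e1)).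
have zb : coef (pmul b q) w = 0.
  apply: coef_pmul_zero => w'; rewrite /b (coef_filter (fun x => ~~ (odd (size x) == e1))); case: ifP => // hn.
  by apply/eqP; apply: contraNT hn => /Hp ->; rewrite eqxx.
rewrite ep zb addr0 coef_pmul => /sum_nz_ex [t].
rewrite /g mem_filter => /andP [/eqP et tp].
have -> : \sum_(s <- q) (if t.2 ++ s.2 == w then t.1 * s.1 else 0) =
  (if take (size t.2) w == t.2 then t.1 * coef q (drop (size t.2) w) else 0).
  rewrite coefE mulr_sumr; case: ifP => ht.
    by apply: eq_bigr => s _; rewrite cat_eq_l ht /= eq_sym; case: ifP; rewrite ?mulr0.
  by apply: big1 => s _; rewrite cat_eq_l ht.
case: ifP => [/eqP ht|]; last by rewrite eqxx.
rewrite mulf_eq0 negb_or => /andP [_ /Hq].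
rewrite size_drop => hd.
rewrite -[w](cat_take_drop (size t.2)) size_cat oddD ht et size_drop hd.
by [].
Qed.


Lemma H_pprod (f : 'I_2 -> fpoly K) u : odd_endo f -> H (pprod (map f u)) (odd (size u)).
Proof.
move=> hf; elim: u => [|i u IH] /=.
  move=> w; rewrite /pprod /= /coef big_cons big_nil /=.
  by case: (eqVneq [::] w) => [<-|]; rewrite ?eqxx ?addr0.
have -> : ~~ odd (size u) = true (+) odd (size u) by [].
by apply: H_pmul => // w; apply: hf.
Qed.

Lemma coef_subst1 (f : 'I_2 -> fpoly K) u w :
  coef (subst f [:: (1, u)]) w = coef (pprod (map f u)) w.
Proof. by rewrite /subst /= cats0 coef_pscale mul1r. Qed.

Lemma tcoef_tau q (t : tens K) x y :
  tcoef (tau q t) (x, y) = braid_coef q y x * tcoef t (y, x).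
Proof.
rewrite /tcoef /tau big_map mulr_sumr big_mkcond [RHS]big_mkcond; apply: eq_bigr => s _ /=.
case: s => a [u v] /=; rewrite !xpair_eqE.
case: (eqVneq u y) => [->|]; case: (eqVneq v x) => [->|] //=; rewrite ?mulr0 ?andbF //.
Qed.

Lemma tcoef_ptens (p r : fpoly K) x y :
  tcoef (ptens p r) (x, y) = coef p x * coef r y.
Proof.
rewrite /tcoef /ptens big_mkcond big_allpairs_dep !coefE big_distrl /=.
apply: eq_bigr => b _; rewrite big_distrr /=; apply: eq_bigr => c _.
by rewrite xpair_eqE; case: (b.2 == x); case: (c.2 == y); rewrite ?mulr0 ?mul0r.
Qed.

Lemma tcoef_tmap (f : 'I_2 -> fpoly K) (t : tens K) x y :
  tcoef (tmap f t) (x, y) =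
  \sum_(s <- t) s.1 * (coef (subst f [:: (1, s.2.1)]) x * coef (subst f [:: (1, s.2.2)]) y).
Proof.
rewrite /tcoef /tmap big_mkcond big_flatten big_map; apply: eq_bigr => s _.
rewrite -tcoef_ptens /tcoef big_map mulr_sumr [RHS]big_mkcond; apply: eq_bigr => c _ /=.
by case: ifP; rewrite ?mulr0.
Qed.

Lemma count2 (s : word) : (count_mem (ord0 : 'I_2) s + count_mem (lift (ord0 : 'I_2) (ord0 : 'I_1)) s = size s)%N.
Proof.
elim: s => [|i s IH] //=; rewrite -IH.
case: i => [[|[|//]]] hi /=; rewrite /eq_op /=; lia.
Qed.

Lemma braidE u v : braid_coef (fun _ _ => (-1 : K)) u v = (-1) ^+ (size u * size v).
Proof.
rewrite /braid_coef !big_ord_recl !big_ord0 !mulr1 -!exprD.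
rewrite -(count2 u) -(count2 v); congr (_ ^+ _).
rewrite /bump /=. lia.
Qed.

Lemma coef_pmul1 (p : fpoly K) w : coef (pmul p (pone K)) w = coef p w.
Proof.
rewrite coef_pmul coefE; apply: eq_bigr => t _.
by rewrite /pone big_cons big_nil /= cats0 mulr1 addr0.
Qed.

End Aux.

Theorem lemma6 (K : fieldType) (hK : (2 \notin [pchar K])%N) :
  forall f : 'I_2 -> fpoly K,
    in_Aut_tau (fun _ _ => -1) f <-> in_G_odd f.
Proof.
move=> f; split.
  move=> [haut hbr]; split => // i w hw.
  have := hbr [:: (1, ([:: i], [:: i]))] (w, w).
  rewrite tcoef_tmap tcoef_tau tcoef_tmap /tau /= !big_cons !big_nil /=.
  rewrite !coef_subst1 /= !coef_pmul1 !braidE !addr0 mul1r mulr1.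
  set c := coef (f i) w => e.
  have cc : c * c != 0 by rewrite mulf_neq0.
  have e2 : (-1 : K) = (-1) ^+ (size w * size w).
    by apply: (mulIf cc); rewrite e.
  move: e2; rewrite -signr_odd oddM andbb.
  case: (odd (size w)) => //= e2.
  exfalso; move: hK; rewrite inE /=; move/eqP; apply.
  rewrite expr0 in e2.
  by rewrite mulr2n -[X in X + 1]e2 addNr.
move=> [haut hodd]; split => // t [x y].
rewrite tcoef_tmap tcoef_tau tcoef_tmap /tau big_map mulr_sumr; apply: eq_bigr => s _ /=.
rewrite !coef_subst1 !braidE.
set a := coef (pprod (map f s.2.2)) x.
set b := coef (pprod (map f s.2.1)) y.
case: (eqVneq a 0) => ha; first by rewrite ha !(mulr0, mul0r).
case: (eqVneq b 0) => hb; first by rewrite hb !(mulr0, mul0r).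
have hx := @H_pprod K f s.2.2 hodd _ ha.
have hy := @H_pprod K f s.2.1 hodd _ hb.
rewrite -signr_odd oddM -hx -hy -[X in _ = X * _]signr_odd oddM andbC.
by rewrite -mulrA (mulrC a b).
Qed.
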